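(* Let $\gamma > 1$ and let $I$ be a $\gamma$-stable instance of the metric Steiner tree problem with optimal Steiner tree $\mathrm{OPT}$. Let $H$ be a subgraph of $\mathrm{OPT}$ with at least one edge, let $ab$ be an edge of $H$, and let $c \in V(\mathrm{OPT}) \setminus V(H)$ satisfy $w_{bc} < \gamma(\gamma - 1) w_{ab}$. Then $w_{bc} < \frac{w_{ab}}{\gamma - 1}$ and $w_{ab} < \frac{w_{bc}}{\gamma - 1}$.
   Context: An instance of the metric Steiner tree problem consists of a finite set $V$ of points of a metric space with metric $d$, a set $T \subseteq V$ of terminals, and the complete graph on $V$ with edge weights $w_{uv} = d(u,v)$. Points of $V \setminus T$ are Steiner points. A Steiner tree is a tree in this complete graph whose vertex set contains all of $T$; its weight is the sum of its edge weights. For $\gamma > 1$, the instance is $\gamma$-stable if it has a minimum-weight Steiner tree $\mathrm{OPT}$ such that for every $w' : V \times V \to \mathbb{R}_{\ge 0}$ with $w_{uv} \le w'_{uv} \le \gamma w_{uv}$ for all $u,v$, every minimum-weight Steiner tree with respect to $w'$ equals $\mathrm{OPT}$. $V(\mathrm{OPT})$ and $V(H)$ denote vertex sets. *)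

(* Defs.v *)
From HB Require Import structures.
From mathcomp Require Import all_boot all_order all_algebra.
Set Implicit Arguments. Unset Strict Implicit. Unset Printing Implicit Defensive.
Import Order.TTheory GRing.Theory Num.Theory.
Local Open Scope ring_scope.

Section Steiner.
Variable V : finType.

(* A graph on (a subset of) V: vertex set and set of edges; edges are
   2-element subsets of V (simple undirected graphs, subgraphs of the
   complete graph on V). *)
Definition graph := ({set V} * {set {set V}})%type.

Definition is_graph (G : graph) : Prop :=
  forall e, e \in G.2 -> #|e| = 2%N /\ e \subset G.1.

Definition adj (E : {set {set V}}) : rel V := fun x y => [set x; y] \in E.

Definition connected_graph (G : graph) : Prop :=
  forall x y, x \in G.1 -> y \in G.1 -> connect (adj G.2) x y.

Definition acyclic_graph (G : graph) : Prop :=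
  forall s : seq V, uniq s -> (2 < size s)%N -> ~~ cycle (adj G.2) s.

Definition is_tree (G : graph) : Prop :=
  [/\ is_graph G, G.1 != set0, connected_graph G & acyclic_graph G].

Definition steiner_tree (Tm : {set V}) (G : graph) : Prop :=
  is_tree G /\ Tm \subset G.1.

Definition subgraph (H G : graph) : Prop :=
  [/\ is_graph H, H.1 \subset G.1 & H.2 \subset G.2].

Variable R : realFieldType.

Definition is_metric (d : V -> V -> R) : Prop :=
  [/\ forall x y, d x y = 0 <-> x = y,
      forall x y, d x y = d y x &
      forall x y z, d x z <= d x y + d y z].

Definition weight (W : {set V} -> R) (G : graph) : R := \sum_(e in G.2) W e.

Definition min_steiner (Tm : {set V}) (W : {set V} -> R) (G : graph) : Prop :=
  steiner_tree Tm G /\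
  forall G', steiner_tree Tm G' -> weight W G <= weight W G'.

Definition stable_opt (gamma : R) (Tm : {set V}) (W : {set V} -> R)
    (OPT : graph) : Prop :=
  min_steiner Tm W OPT /\
  forall W' : {set V} -> R,
    (forall e : {set V}, #|e| = 2%N -> W e <= W' e <= gamma * W e) ->
    forall G, min_steiner Tm W' G -> G = OPT.

End Steiner.

(* Main.v *)
Require Import Defs.
Set Implicit Arguments. Unset Strict Implicit.
From HB Require Import structures.
From mathcomp Require Import all_boot all_order all_algebra.
From mathcomp Require Import lra.
From Stdlib Require Import Classical.
Import Order.TTheory GRing.Theory Num.Theory.
Local Open Scope ring_scope.

Lemma ex_min (X : finType) (R : realDomainType) (P : X -> Prop) (f : X -> R) x0 :
  P x0 -> exists x, P x /\ forall y, P y -> f x <= f y.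
Proof.
suff H : forall n x, (#|[set y | (f y < f x)%R]| <= n)%N -> P x ->
   exists x, P x /\ forall y, P y -> f x <= f y.
  by move=> Px0; apply: (H _ x0 (leqnn _)).
elim=> [|n IH] x Hc Px.
  exists x; split=> // y Py; rewrite leNgt; apply/negP=> lt.
  move: Hc; rewrite leqn0 => /eqP/cards0_eq E.
  have : y \in [set y | f y < f x] by rewrite inE.
  by rewrite E in_set0.
case: (classic (exists y, P y /\ f y < f x)) => [[y [Py lt]] | nex].
  apply: (IH y) => //.
  have : [set z | f z < f y] \proper [set z | f z < f x].
    apply/properP; split.
      by apply/subsetP=> z; rewrite !inE => h; apply: lt_trans h lt.
    by exists y; rewrite !inE ?ltxx.
  by move/proper_card => h; rewrite -ltnS; apply: leq_trans h Hc.
exists x; split=> // y Py; rewrite leNgt; apply/negP => lt; apply: nex.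
by exists y.
Qed. 

Section G.
Variable V : finType.
Implicit Types (E F : {set {set V}}) (S : {set V}).

Lemma adj_sym E : symmetric (adj E).
Proof. by move=> x y; rewrite /adj setUC. Qed.

Lemma connectC E x y : connect (adj E) x y = connect (adj E) y x.
Proof. exact: (sym_connect_sym (adj_sym E)). Qed.

Lemma connect_mono E F : E \subset F -> forall x y,
  connect (adj E) x y -> connect (adj F) x y.
Proof.
move=> sEF x y; apply: connect_sub => p q Hpq; apply: connect1.
by rewrite /adj (subsetP sEF).
Qed. 

Lemma split_edge S E u v z : connected_graph (S, E) -> u \in S -> z \in S ->
  connect (adj (E :\ [set u; v])) z u || connect (adj (E :\ [set u; v])) z v.
Proof.
move=> Hc Hu Hz; set E' := E :\ [set u; v].
have := Hc u z Hu Hz; move/connectP => [p Pp ->].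
rewrite !(connectC E' (last u p)).
have aux : forall p x, path (adj E) x p ->
    connect (adj E') u x || connect (adj E') v x ->
    connect (adj E') u (last x p) || connect (adj E') v (last x p).
  elim=> [|y q IH] x //= /andP[Hxy Pq] Hx; apply: IH Pq _.
  case: (eqVneq [set x; y] [set u; v]) => [Exy | Nxy].
    have : y \in [set u; v] by rewrite -Exy set22.
    by rewrite in_set2 => /orP[/eqP->|/eqP->]; rewrite connect0 ?orbT.
  have Hxy' : adj E' x y by rewrite /adj /E' in_setD1 Nxy.
  by case/orP: Hx => H; apply/orP; [left|right];
    apply: connect_trans H (connect1 Hxy').
by apply: aux Pp _; rewrite connect0.
Qed. 

Lemma exch_conn S E u v x y : is_graph (S, E) -> connected_graph (S, E) ->
  [set u; v] \in E ->
  connect (adj (E :\ [set u; v])) x u -> connect (adj (E :\ [set u; v])) y v ->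
  connected_graph (S, [set x; y] |: (E :\ [set u; v])).
Proof.
move=> Hg Hc Huv Hxu Hyv p q Hp Hq /=.
have [_ sS] := Hg _ Huv.
have Hu : u \in S by apply: (subsetP sS); rewrite set21.
set E' := E :\ [set u; v]; set F := [set x; y] |: E'.
have sub : E' \subset F by apply: subsetUr.
have toU : forall z, z \in S -> connect (adj F) z u.
  move=> z Hz; case/orP: (split_edge v Hc Hu Hz) => H.
    exact: connect_mono sub _ _ H.
  apply: connect_trans (connect_mono sub H) _.
  apply: connect_trans (_ : connect (adj F) v y) _.
    by rewrite connectC; apply: connect_mono sub _ _ Hyv.
  apply: connect_trans (_ : connect (adj F) y x) _.
    by apply: connect1; rewrite adj_sym /adj /F setU11.
  exact: connect_mono sub _ _ Hxu.
by apply: connect_trans (toU p Hp) _; rewrite connectC; apply: toU.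
Qed. 

Lemma adjD1 F e p q : adj F p q -> [set p; q] != e -> adj (F :\ e) p q.
Proof. by rewrite /adj in_setD1 => -> ->. Qed.

Lemma cycle_break F s : uniq s -> (2 < size s)%N -> cycle (adj F) s ->
  exists e, e \in F /\ forall p q, adj F p q -> connect (adj (F :\ e)) p q.
Proof.
case: s => [|x0 [|x1 [|y t]]] //= Hu _.
rewrite rcons_path /= => /and4P[H01 H1y Pyt Hl0].
exists [set x0; x1]; split => //.
set e := [set x0; x1]; set F' := F :\ e.
move: Hu => /and4P[Hx0 Hx1 _ _]; move: Hx0 Hx1; rewrite !inE !negb_or => /and3P[n01 n0y n0t] /andP[n1y n1t].
have inE2 : forall z, z \in e -> (z == x0) || (z == x1) by move=> z; rewrite in_set2.
have key : connect (adj F') x1 x0.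
  apply/connectP; exists (y :: rcons t x0); last by rewrite /= last_rcons.
  rewrite /= rcons_path; apply/and3P; split.
  - apply: adjD1 => //; apply/eqP => E.
    have : y \in e by rewrite -E set22.
    by case/inE2/orP => /eqP Ey; [move: n0y|move: n1y]; rewrite Ey eqxx.
  - apply: (sub_in_path (P := [pred z | z \in y :: t])) Pyt; last first.
      by apply/allP.
    move=> p q Hp Hq Hpq; apply: adjD1 => //; apply/eqP => E.
    have : p \in e by rewrite -E set21.
    case/inE2/orP => /eqP Ep; move: Hp; rewrite !inE Ep.
      by move: n0y n0t; rewrite eq_sym => /negbTE-> /negbTE->.
    by move: n1y n1t; rewrite eq_sym => /negbTE-> /negbTE->.
  - apply: adjD1 => //; apply/eqP => E.
    have Hl : last y t \in y :: t by apply: mem_last.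
    have : last y t \in e by rewrite -E set21.
    case/inE2/orP => /eqP Ep; move: Hl; rewrite !inE Ep.
      by move: n0y n0t; rewrite eq_sym => /negbTE-> /negbTE->.
    by move: n1y n1t; rewrite eq_sym => /negbTE-> /negbTE->.
move=> p q Hpq; case: (eqVneq [set p; q] e) => [E | N]; last first.
  by apply: connect1; apply: adjD1.
have : p \in e by rewrite -E set21.
have : q \in e by rewrite -E set22.
by case/inE2/orP => /eqP -> /inE2/orP [] /eqP ->; rewrite ?connect0 // connectC.
Qed. 

Lemma extract S F : is_graph (S, F) -> connected_graph (S, F) -> S != set0 ->
  exists F0, F0 \subset F /\ is_tree (S, F0).
Proof.
move=> Hg Hc Hne.
have [F0 [[sF0 cF0] minF0]] := ex_min
  (P := fun F' => F' \subset F /\ connected_graph (S, F'))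
  (fun F' => (#|F'|%:Z)) (conj (subxx F) Hc).
exists F0; split => //; split => //.
  by move=> e He; apply: Hg; apply: (subsetP sF0).
move=> s Hu Hs; apply/negP => Hcyc.
have [e [He Hall]] := cycle_break Hu Hs Hcyc.
have : F0 :\ e \subset F /\ connected_graph (S, F0 :\ e).
  split; first by apply: subset_trans sF0; apply: subD1set.
  move=> x y Hx Hy; apply: connect_sub (cF0 x y Hx Hy) => p q; exact: Hall.
move/minF0; rewrite lez_nat (cardsD1 e F0) He add1n.
by rewrite ltnn.
Qed. 

Lemma first_step E b c : b != c -> connect (adj E) b c ->
  exists e, adj E b e /\ connect (adj (E :\ [set b; e])) e c.
Proof.
move=> nbc /connectP[p Pp Ec]; subst c; move: nbc.
case: (shortenP Pp) => p' Pp' Up' _.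
case: p' Pp' Up' => [|e q] /=; first by rewrite eqxx.
move=> /andP[Hbe Pq] /andP[nb _] _; exists e; split => //.
apply/connectP; exists q => //.
apply: (sub_in_path (P := [pred z | z != b])) Pq.
  move=> z w; rewrite !inE => Hz Hw Hzw; apply: adjD1 => //; apply/eqP => Eq.
  have : b \in [set z; w] by rewrite Eq set21.
  rewrite in_set2 => /orP[/eqP Ez|/eqP Ew].
    by rewrite Ez eqxx in Hz.
  by rewrite Ew eqxx in Hw.
apply/allP => z Hz; rewrite inE; apply/eqP => Ezb.
by move: nb; rewrite -Ezb Hz.
Qed.

Lemma set2_neq (p q r s : V) : p \notin [set r; s] -> [set p; q] != [set r; s].
Proof. by move=> h; apply/eqP => E; move: h; rewrite -E set21. Qed.

Lemma set2_neqr (p q r s : V) : q \notin [set r; s] -> [set p; q] != [set r; s].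
Proof. by move=> h; apply/eqP => E; move: h; rewrite -E set22. Qed.

End G.

Lemma sum_sub (V : finType) (R : realDomainType) (f : {set V} -> R) (A B : {set {set V}}) :
  A \subset B -> (forall e, e \in B -> 0 <= f e) ->
  \sum_(e in A) f e <= \sum_(e in B) f e.
Proof.
move=> sAB Hf; rewrite [X in _ <= X](big_setID A) /= (setIidPr sAB) lerDl.
by apply: sumr_ge0 => e; rewrite inE => /andP[_ /Hf].
Qed. 

Lemma sum_U1 (V : finType) (R : realDomainType) (f : {set V} -> R) a (A : {set {set V}}) :
  0 <= f a -> \sum_(e in a |: A) f e <= f a + \sum_(e in A) f e.
Proof.
move=> Ha; case: (boolP (a \in A)) => Hin; last by rewrite big_setU1.
have -> : a |: A = A by apply/setUidPr; rewrite sub1set.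
by rewrite lerDr.
Qed. 

Lemma exch (R : realFieldType) (V : finType) (d : V -> V -> R) (Tm : {set V})
  (W : {set V} -> R) (gamma : R) (S : {set V}) (E : {set {set V}}) (u v x y : V) :
  is_metric d -> (forall u v : V, u != v -> W [set u; v] = d u v) -> 1 < gamma ->
  stable_opt gamma Tm W (S, E) -> [set u; v] \in E -> x \in S -> y \in S -> x != y ->
  [set x; y] != [set u; v] ->
  connect (adj (E :\ [set u; v])) x u -> connect (adj (E :\ [set u; v])) y v ->
  gamma * d u v < d x y.
Proof.
move=> [Hd0 Hsym Htri] HW Hg [[[Htree HTm] Hmin] Huniq] Huv Hx Hy nxy nxyuv Hxu Hyv.
have Htree' := Htree; case: Htree' => Hgr Hne Hconn Hacyc.
have dge0 : forall p q, 0 <= d p q.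
  move=> p q; have := Htri p q p; rewrite (Hsym q p) (proj2 (Hd0 p p) erefl) => h.
  lra.
have Wge0 : forall e : {set V}, #|e| = 2%N -> 0 <= W e.
  by move=> e /eqP/cards2P [p [q [npq ->]]]; rewrite HW.
rewrite ltNge; apply/negP => Hle.
pose W' := fun e => if e == [set u; v] then gamma * W e else W e.
have HW' : forall e : {set V}, #|e| = 2%N -> W e <= W' e <= gamma * W e.
  move=> e He; have := Wge0 e He; rewrite /W'; case: ifP => _ h; apply/andP; split;
    rewrite ?lexx //; apply: ler_peMl => //; exact: ltW.
have uv2 : #|[set u; v]| = 2%N by have [] := Hgr _ Huv.
have nuv : u != v by move: uv2; rewrite cards2; case: (u != v).
have W'ge0 : forall G : graph V, is_graph G -> forall e, e \in G.2 -> 0 <= W' e.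
  move=> G HG e He; have [h2 _] := HG e He; have /andP[h _] := HW' e h2.
  exact: le_trans (Wge0 e h2) h.
set E' := E :\ [set u; v]; set F := [set x; y] |: E'.
have HgF : is_graph (S, F).
  move=> e /=; rewrite /F in_setU1 => /orP[/eqP -> | ].
    rewrite cards2 nxy; split => //; apply/subsetP => z.
    by rewrite in_set2 => /orP[]/eqP->.
  by rewrite /E' in_setD1 => /andP[_ /Hgr].
have HcF : connected_graph (S, F) := exch_conn Hgr Hconn Huv Hxu Hyv.
have [F0 [sF0 HT]] := extract HgF HcF Hne.
have HsT : steiner_tree Tm (S, F0) by split.
have wT : weight W' (S, F0) <= weight W' (S, E).
  rewrite /weight /=.
  apply: le_trans (sum_sub sF0 (W'ge0 _ HgF)) _.
  apply: le_trans (sum_U1 _ (W'ge0 _ HgF _ (setU11 _ _))) _.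
  rewrite (big_setD1 _ Huv) /= lerD2r /W' eqxx (negbTE nxyuv) !HW //.
have [G0 [HG0 minG0]] := ex_min (P := steiner_tree Tm) (weight W')
  (conj Htree HTm : steiner_tree Tm (S, E)).
have EG0 : G0 = (S, E) := Huniq W' HW' G0 (conj HG0 minG0).
have ET : (S, F0) = (S, E).
  apply: (Huniq W' HW'); split => // G' HG'; apply: le_trans wT _.
  by rewrite -EG0; exact: minG0.
case: ET => EF0.
have : [set u; v] \in F by rewrite (subsetP sF0) // EF0.
by rewrite /F in_setU1 eq_sym (negbTE nxyuv) /E' in_setD1 eqxx.
Qed.

Theorem mainTheorem3 (R : realFieldType) (V : finType) (d : V -> V -> R)
    (Tm : {set V}) (W : {set V} -> R) (gamma : R)
    (OPT H : graph V) (a b c : V) :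
  is_metric d ->
  (forall u v : V, u != v -> W [set u; v] = d u v) ->
  1 < gamma ->
  stable_opt gamma Tm W OPT ->
  subgraph H OPT ->
  H.2 != set0 ->
  [set a; b] \in H.2 ->
  c \in OPT.1 -> c \notin H.1 ->
  d b c < gamma * (gamma - 1) * d a b ->
  d b c < d a b / (gamma - 1) /\ d a b < d b c / (gamma - 1).
Proof.
move=> Hm HW Hg Hst [HgH sV sE] _ Hab Hc HcH Hbc.
case: OPT Hst sV sE Hc => S E Hst /= sV sE Hc.
have [ab2 abH] := HgH _ Hab.
have nab : a != b by move: ab2; rewrite cards2; case: (a != b).
have aH : a \in H.1 by apply: (subsetP abH); rewrite set21.
have bH : b \in H.1 by apply: (subsetP abH); rewrite set22.
have aS : a \in S := subsetP sV _ aH.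
have bS : b \in S := subsetP sV _ bH.
have nca : c != a by apply/eqP => Ec; rewrite Ec aH in HcH.
have ncb : c != b by apply/eqP => Ec; rewrite Ec bH in HcH.
have abE : [set a; b] \in E := subsetP sE _ Hab.
have Hm' := Hm; case: Hm' => Hd0 Hsym Htri.
have dge0 : forall p q, 0 <= d p q.
  move=> p q; have := Htri p q p; rewrite (Hsym q p) (proj2 (Hd0 p p) erefl) => h.
  lra.
have [[[Htree _] _] _] := Hst; case: Htree => Hgr _ Hconn _.
have g1 : 0 < gamma - 1 by rewrite subr_gt0.
set Eab := E :\ [set a; b].
have sEab : Eab \subset E by apply: subD1set.
have nac : a != c by rewrite eq_sym.
have nbc : b != c by rewrite eq_sym.
case/orP: (split_edge b Hconn aS Hc) => Hca.
-
  have Hac : connect (adj Eab) a c by rewrite connectC.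
  have [e [Hae Hec]] := first_step nac Hac.
  have Hae' := Hae; move: Hae'; rewrite /adj in_setD1 => /andP[aeab aeE].
  have [ae2 aeS] := Hgr _ aeE.
  have nae : a != e by move: ae2; rewrite cards2; case: (a != e).
  have eS : e \in S by apply: (subsetP aeS); rewrite set22.
  have neb : e != b by apply/eqP => Ee; rewrite Ee eqxx in aeab.
  have n1 : e \notin [set a; b] by rewrite in_set2 negb_or (eq_sym e a) nae neb.
  have c1 : connect (adj Eab) e a by apply: connect1; rewrite adj_sym.
  have h1 := exch (u := a) (v := b) (x := e) (y := b) Hm HW Hg Hst abE eS bS neb
    (set2_neq b n1) c1 (connect0 _ _).
  have n2 : b \notin [set a; e] by rewrite in_set2 negb_or (eq_sym b a) nab eq_sym neb.
  have a2 : adj E b a by rewrite adj_sym.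
  have c2 : connect (adj (E :\ [set a; e])) b a by apply: connect1; apply: adjD1 a2 (set2_neq a n2).
  have c3 : connect (adj (E :\ [set a; e])) c e.
    by rewrite connectC; apply: connect_mono (setSD _ sEab) _ _ Hec.
  have h2 := exch (u := a) (v := e) (x := b) (y := c) Hm HW Hg Hst aeE bS Hc nbc
    (set2_neq c n2) c2 c3.
  have h3 := Htri e a b; rewrite (Hsym e a) in h3.
  exfalso; nra.
-
  have Hbc' : connect (adj Eab) b c by rewrite connectC.
  have [e [Hbe Hec]] := first_step nbc Hbc'.
  have Hbe' := Hbe; move: Hbe'; rewrite /adj in_setD1 => /andP[beab beE].
  have [be2 beS] := Hgr _ beE.
  have nbe : b != e by move: be2; rewrite cards2; case: (b != e).
  have eS : e \in S by apply: (subsetP beS); rewrite set22.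
  have nea : e != a by apply/eqP => Ee; rewrite Ee setUC eqxx in beab.
  case: (eqVneq e c) => [Eec | nec].
  + subst e.
    have n1 : c \notin [set a; b] by rewrite in_set2 negb_or nca ncb.
    have h1 := exch (u := a) (v := b) (x := a) (y := c) Hm HW Hg Hst abE aS Hc nac
      (set2_neqr a n1) (connect0 _ _) Hca.
    have n2 : a \notin [set b; c] by rewrite in_set2 negb_or nab nac.
    have c2 : connect (adj (E :\ [set b; c])) a b.
      by apply: connect1; apply: adjD1 abE (set2_neq b n2).
    have h2 := exch (u := b) (v := c) (x := a) (y := c) Hm HW Hg Hst beE aS Hc nac
      (set2_neq c n2) c2 (connect0 _ _).
    have h3 := Htri a b c.
    split; rewrite ltr_pdivlMr //; nra.
  + have nae : a != e by rewrite eq_sym.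
    have n1 : e \notin [set a; b] by rewrite in_set2 negb_or nea eq_sym nbe.
    have c1 : connect (adj Eab) e b by apply: connect1; rewrite adj_sym.
    have h1 := exch (u := a) (v := b) (x := a) (y := e) Hm HW Hg Hst abE aS eS nae
      (set2_neqr a n1) (connect0 _ _) c1.
    have n2 : c \notin [set b; e] by rewrite in_set2 negb_or ncb (eq_sym c e) nec.
    have c3 : connect (adj (E :\ [set b; e])) c e.
      by rewrite connectC; apply: connect_mono (setSD _ sEab) _ _ Hec.
    have h2 := exch (u := b) (v := e) (x := b) (y := c) Hm HW Hg Hst beE bS Hc nbc
      (set2_neqr b n2) (connect0 _ _) c3.
    have h3 := Htri a b e.
    exfalso; nra.
Qed.
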